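(* Let $\mathcal{F}$ be a construction scheme over $\omega_1$ of a good type, let $(X,\leq)$ be an $\omega_1$-like partial order and let $\phi:X\to\omega_1$ be a bijection with $\phi(x)<\phi(y)$ whenever $x<y$. For $x\in X$ and $k\in\omega$ let $M^k_x=\{z\in X: z\leq x\text{ and }\phi(z)\in(\phi(x))_k\}$. Then for all $x,y\in X$ and $k\in\omega$: (1) if $\inf(x,y)$ exists and $k>\rho^{\phi[\{x,y,\inf(x,y)\}]}$, then $M^k_x\cap M^k_y=M^k_{\inf(x,y)}$; (2) if $y\leq x$ and $k>\rho(\phi(x),\phi(y))$, then $M^k_y\subseteq M^k_x$; (3) if $y\not\leq x$, then $y\in M^k_y\setminus M^k_x$; (4) if $x$ is successor-like and $k>\rho^{\phi[\mathrm{pred}(x)\cup\{x\}]}$, then $M^k_x\setminus\bigcup_{z\in\mathrm{pred}(x)}M^k_z=\{x\}$; (5) if $x$ and $y$ are incompatible, then $M^k_x\cap M^k_y=\emptyset$.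
   Context: A type is a sequence $\langle m_k,n_{k+1},r_{k+1}\rangle_{k\in\omega}$ of natural numbers with $m_0=1$ and, for all $k$, $n_{k+1}\geq2$, $m_k>r_{k+1}$, $m_{k+1}=r_{k+1}+(m_k-r_{k+1})n_{k+1}$; good if each $r$ equals $r_k$ for infinitely many $k\geq1$. A construction scheme of type $\tau$ over a set of ordinals $Y$ is a family $\mathcal{F}$ of nonempty finite subsets of $Y$, cofinal among finite subsets of $Y$ under $\subseteq$, each of size $m_k$ for some $k$, such that with $\mathcal{F}_k=\{F\in\mathcal{F}:|F|=m_k\}$: (i) for $E,F\in\mathcal{F}_k$, $E\cap F$ is an initial segment of both; (ii) every $F\in\mathcal{F}_{k+1}$ equals $F_0\cup\dots\cup F_{n_{k+1}-1}$ with $F_i\in\mathcal{F}_k$ forming a $\Delta$-system with root $R(F)$, $|R(F)|=r_{k+1}$, $R(F)<F_0\setminus R(F)<\dots<F_{n_{k+1}-1}\setminus R(F)$ ($A<B$ meaning every element of $A$ is below every element of $B$). $\rho(\alpha,\beta)=\min\{k:\exists F\in\mathcal{F}_k\ \{\alpha,\beta\}\subseteq F\}$; for finite $A$, $\rho^A=\max\{\rho(\alpha,\beta):\alpha,\beta\in A\}$; $(\alpha)_k=\{\xi\leq\alpha:\rho(\xi,\alpha)\leq k\}$. A partial order is $\omega_1$-like if it is well-founded, of size $\omega_1$, and every $(-\infty,x)=\{y:y<x\}$ is countable. $\inf(x,y)$ is the greatest lower bound when it exists; $x,y$ are incompatible if no $z$ satisfies $z\leq x$ and $z\leq y$. $\mathrm{pred}(x)$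 is the set of maximal elements of $(-\infty,x)$; $x$ is successor-like if $\mathrm{pred}(x)$ is finite and every $y<x$ satisfies $y\leq z$ for some $z\in\mathrm{pred}(x)$. *)

(* Defs.v *)
(* omega_1 is modelled abstractly as a type W with a strict
   well-order ltW that is uncountable and all of whose proper initial
   segments are countable (this characterises omega_1 up to isomorphism). *)
From Stdlib Require Import Arith List.
Import ListNotations.

Set Implicit Arguments.

Definition card {T : Type} (A : T -> Prop) (n : nat) : Prop :=
  exists l : list T, NoDup l /\ length l = n /\ forall x, A x <-> In x l.

Definition finite_pred {T : Type} (A : T -> Prop) : Prop :=
  exists l : list T, forall x, A x -> In x l.

Definition countable_pred {T : Type} (A : T -> Prop) : Prop :=
  exists f : T -> nat, forall x y, A x -> A y -> f x = f y -> x = y.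

Definition bijective {A B : Type} (f : A -> B) : Prop :=
  (forall x y, f x = f y -> x = y) /\ (forall b, exists a, f a = b).

Definition is_omega1 (W : Type) (ltW : W -> W -> Prop) : Prop :=
  (forall a, ~ ltW a a) /\
  (forall a b c, ltW a b -> ltW b c -> ltW a c) /\
  (forall a b, ltW a b \/ a = b \/ ltW b a) /\
  well_founded ltW /\
  ~ countable_pred (fun _ : W => True) /\
  (forall a, countable_pred (fun b => ltW b a)).

Definition leW {W : Type} (ltW : W -> W -> Prop) (a b : W) : Prop :=
  ltW a b \/ a = b.

(* tau = <m_k, n_{k+1}, r_{k+1}>_k ; n and r are only used at indices >= 1 *)
Definition is_type (m n r : nat -> nat) : Prop :=
  m 0 = 1 /\
  forall k, 2 <= n (S k) /\ r (S k) < m k /\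
            m (S k) = r (S k) + (m k - r (S k)) * n (S k).

Definition good_type (r : nat -> nat) : Prop :=
  forall r0 N, exists k, N <= k /\ 1 <= k /\ r k = r0.

Section Scheme.
Variables (W : Type) (ltW : W -> W -> Prop).

Definition level (Fam : (W -> Prop) -> Prop) (m : nat -> nat) (k : nat)
  (F : W -> Prop) : Prop := Fam F /\ card F (m k).

Definition init_seg (I A : W -> Prop) : Prop :=
  (forall x, I x -> A x) /\ (forall x y, I x -> A y -> ltW y x -> I y).

Definition is_construction_scheme (m n r : nat -> nat)
  (Fam : (W -> Prop) -> Prop) : Prop :=
  (forall F, Fam F -> (exists x, F x) /\ exists k, card F (m k)) /\
  (forall l : list W, exists F, Fam F /\ forall x, In x l -> F x) /\
  (forall k E F, level Fam m k E -> level Fam m k F ->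
     init_seg (fun x => E x /\ F x) E /\ init_seg (fun x => E x /\ F x) F) /\
  (forall k F, level Fam m (S k) F ->
     exists (G : nat -> W -> Prop) (R : W -> Prop),
       (forall i, i < n (S k) -> level Fam m k (G i)) /\
       (forall x, F x <-> exists i, i < n (S k) /\ G i x) /\
       (forall i j, i < n (S k) -> j < n (S k) -> i <> j ->
          forall x, (G i x /\ G j x) <-> R x) /\
       (forall i, i < n (S k) -> forall x, R x -> G i x) /\
       card R (r (S k)) /\
       (forall i x y, i < n (S k) -> R x -> G i y -> ~ R y -> ltW x y) /\
       (forall i j x y, i < j -> j < n (S k) ->
          G i x -> ~ R x -> G j y -> ~ R y -> ltW x y)).

(* rho(a,b) = min { k | exists F in F_k, {a,b} included in F }.
   We only need comparisons with rho, which we state by unfolding the min: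
   rho_lt a b k  <->  rho(a,b) < k,   rho_le a b k  <->  rho(a,b) <= k. *)
Definition rho_lt (Fam : (W -> Prop) -> Prop) (m : nat -> nat)
  (a b : W) (k : nat) : Prop :=
  exists j, j < k /\ exists F, level Fam m j F /\ F a /\ F b.

Definition rho_le (Fam : (W -> Prop) -> Prop) (m : nat -> nat)
  (a b : W) (k : nat) : Prop :=
  exists j, j <= k /\ exists F, level Fam m j F /\ F a /\ F b.

Definition rhoA_lt (Fam : (W -> Prop) -> Prop) (m : nat -> nat)
  (A : W -> Prop) (k : nat) : Prop :=
  forall a b, A a -> A b -> rho_lt Fam m a b k.

Definition closure_k (Fam : (W -> Prop) -> Prop) (m : nat -> nat)
  (a : W) (k : nat) (xi : W) : Prop :=
  leW ltW xi a /\ rho_le Fam m xi a k.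

End Scheme.

Section Poset.
Variables (X : Type) (le : X -> X -> Prop).

Definition is_partial_order : Prop :=
  (forall x, le x x) /\
  (forall x y, le x y -> le y x -> x = y) /\
  (forall x y z, le x y -> le y z -> le x z).

Definition ltX (x y : X) : Prop := le x y /\ x <> y.

Definition omega1_like (W : Type) : Prop :=
  well_founded ltX /\
  (exists f : X -> W, bijective f) /\
  (forall x, countable_pred (fun y => ltX y x)).

Definition is_inf (x y i : X) : Prop :=
  le i x /\ le i y /\ forall z, le z x -> le z y -> le z i.

Definition incompatible (x y : X) : Prop :=
  ~ exists z, le z x /\ le z y.

Definition pred_set (x z : X) : Prop :=
  ltX z x /\ forall w, ltX w x -> le z w -> w = z.

Definition successor_like (x : X) : Prop :=
  finite_pred (pred_set x) /\
  forall y, ltX y x -> exists z, pred_set x z /\ le y z.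

End Poset.

Definition M_set {W X : Type} (ltW : W -> W -> Prop)
  (Fam : (W -> Prop) -> Prop) (m : nat -> nat)
  (le : X -> X -> Prop) (phi : X -> W) (k : nat) (x z : X) : Prop :=
  le z x /\ closure_k ltW Fam m (phi x) k (phi z).

(* Main.v *)
Require Import Defs.
From Stdlib Require Import Arith List Lia Classical ClassicalEpsilon.

Lemma down_lvl (W : Type) (ltW : W -> W -> Prop) (m n r : nat -> nat)
  (Fam : (W -> Prop) -> Prop) (HF : is_construction_scheme ltW m n r Fam) :
  forall d j G a, level Fam m (d + j) G -> G a ->
  exists P, level Fam m j P /\ P a /\ (forall w, P w -> G w).
Proof.
  destruct HF as [_ [_ [_ H4]]].
  induction d as [|d IH]; intros j G a HG Ga.
  - exists G; simpl in HG; auto.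
  - simpl in HG. destruct (H4 _ _ HG) as [Gs [R [HGl [HGu _]]]].
    destruct (proj1 (HGu a) Ga) as [i [Hi Hia]].
    destruct (IH j (Gs i) a (HGl i Hi) Hia) as [P [HP [Pa PG]]].
    exists P; split; [auto|split; [auto|]].
    intros w Pw. apply (proj2 (HGu w)). exists i; auto.
Qed.

Lemma closure_in (W : Type) (ltW : W -> W -> Prop) (m n r : nat -> nat)
  (Fam : (W -> Prop) -> Prop) (HF : is_construction_scheme ltW m n r Fam) :
  forall j k xi al E F, j <= k -> level Fam m j E -> E xi -> E al ->
  leW ltW xi al -> level Fam m k F -> F al -> F xi.
Proof.
  intros j k xi al E F Hjk HE Exi Eal Hle HFl Fal.
  destruct Hle as [Hlt|Heq]; [|subst; auto].
  replace k with ((k - j) + j) in HFl by lia.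
  destruct (@down_lvl _ _ _ _ _ _ HF _ _ _ _ HFl Fal) as [P [HP [Pal PF]]].
  destruct HF as [_ [_ [H3 _]]].
  destruct (H3 j P E HP HE) as [_ [_ Hseg]].
  apply PF. apply (proj1 (Hseg al xi (conj Pal Eal) Exi Hlt)).
Qed.

Lemma mono_m (m n r : nat -> nat) (Htype : is_type m n r) :
  forall a b, a < b -> m a < m b.
Proof.
  destruct Htype as [_ Ht].
  assert (S1 : forall t, m t < m (S t)).
  { intro t. destruct (Ht t) as [Hn [Hr Hm]]. rewrite Hm.
    assert (m t - r (S t) >= 1) by lia.
    assert ((m t - r (S t)) * n (S t) >= (m t - r (S t)) * 2) by (apply Nat.mul_le_mono_l; lia).
    lia. }
  intros a b Hab. induction Hab.
  - apply S1.
  - specialize (S1 m0). lia.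
Qed.

Lemma inf_W (W : Type) (ltW : W -> W -> Prop) (HW : is_omega1 ltW) :
  forall N, exists l : list W, NoDup l /\ length l = N.
Proof.
  destruct HW as [_ [_ [_ [_ [Hunc _]]]]].
  induction N as [|N [l [Hnd Hlen]]].
  - exists nil; split; [constructor|reflexivity].
  - destruct (classic (exists w, ~ In w l)) as [[w Hw]|Hall].
    + exists (w :: l); split; [constructor; auto|simpl; lia].
    + exfalso. apply Hunc.
      assert (Hin : forall w, exists i, nth_error l i = Some w).
      { intro w. apply In_nth_error. apply NNPP. intro H. apply Hall. eauto. }
      exists (fun w => proj1_sig (constructive_indefinite_description _ (Hin w))).
      intros x y _ _ Hxy.
      destruct (constructive_indefinite_description _ (Hin x)) as [i Hi].
      destruct (constructive_indefinite_description _ (Hin y)) as [j Hj].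
      simpl in Hxy. subst. rewrite Hi in Hj. inversion Hj; auto.
Qed.

Lemma exists_level (W : Type) (ltW : W -> W -> Prop) (HW : is_omega1 ltW)
  (m n r : nat -> nat) (Htype : is_type m n r)
  (Fam : (W -> Prop) -> Prop) (HF : is_construction_scheme ltW m n r Fam) :
  forall a k, exists F, level Fam m k F /\ F a.
Proof.
  intros a k.
  destruct (@inf_W _ _ HW (m k)) as [l [Hnd Hlen]].
  pose proof HF as HF'.
  destruct HF' as [H1 [H2 _]].
  destruct (H2 (a :: l)) as [G [HG Hcov]].
  destruct (H1 G HG) as [_ [l' Hc]].
  destruct Hc as [lg [Hndg [Hlg Hiff]]].
  assert (Hlen2 : length l <= length lg).
  { apply NoDup_incl_length; auto. intros w Hw. apply Hiff. apply Hcov. simpl; auto. }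
  assert (Hkl : k <= l').
  { destruct (le_lt_dec k l'); auto. pose proof (@mono_m _ _ _ Htype l' k l0). lia. }
  assert (HGl : level Fam m ((l' - k) + k) G).
  { replace (l' - k + k) with l' by lia. split; auto. exists lg; auto. }
  destruct (@down_lvl _ _ _ _ _ _ HF _ _ _ _ HGl (Hcov a (or_introl eq_refl))) as [P [HP [Pa _]]].
  eauto.
Qed.

Theorem mainTheorem11
  (W : Type) (ltW : W -> W -> Prop) (HW : is_omega1 ltW)
  (m n r : nat -> nat) (Htype : is_type m n r) (Hgood : good_type r)
  (Fam : (W -> Prop) -> Prop) (HF : is_construction_scheme ltW m n r Fam)
  (X : Type) (le : X -> X -> Prop) (Hpo : is_partial_order le)
  (Hlike : omega1_like le W)
  (phi : X -> W) (Hphi : bijective phi)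
  (Hmono : forall x y, ltX le x y -> ltW (phi x) (phi y)) :
  forall (x y : X) (k : nat),
    (* (1) *)
    (forall i, is_inf le x y i ->
       rhoA_lt Fam m (fun a => a = phi x \/ a = phi y \/ a = phi i) k ->
       forall z, (M_set ltW Fam m le phi k x z /\ M_set ltW Fam m le phi k y z)
                 <-> M_set ltW Fam m le phi k i z) /\
    (* (2) *)
    (le y x -> rho_lt Fam m (phi x) (phi y) k ->
       forall z, M_set ltW Fam m le phi k y z -> M_set ltW Fam m le phi k x z) /\
    (* (3) *)
    (~ le y x ->
       M_set ltW Fam m le phi k y y /\ ~ M_set ltW Fam m le phi k x y) /\
    (* (4) *)
    (successor_like le x ->
       rhoA_lt Fam m (fun a => exists z, (pred_set le x z \/ z = x) /\ a = phi z) k ->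
       forall z, (M_set ltW Fam m le phi k x z /\
                  ~ (exists p, pred_set le x p /\ M_set ltW Fam m le phi k p z))
                 <-> z = x) /\
    (* (5) *)
    (incompatible le x y ->
       forall z, ~ (M_set ltW Fam m le phi k x z /\ M_set ltW Fam m le phi k y z)).
Proof.
  destruct Hpo as [Hrefl [Hanti Htrans]].
  assert (Hsub : forall a b, le a b -> leW ltW (phi a) (phi b)).
  { intros a b Hab. destruct (classic (a = b)) as [->|Hne]; [right; reflexivity|].
    left. apply Hmono. split; auto. }
  assert (in_F : forall k x z F, M_set ltW Fam m le phi k x z ->
            level Fam m k F -> F (phi x) -> F (phi z)).
  { intros k x z F [_ [Hl [j [Hj [E [HE [E1 E2]]]]]]] HFl Fx.
    exact (@closure_in _ _ _ _ _ _ HF _ _ _ _ _ _ Hj HE E1 E2 Hl HFl Fx). }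
  assert (rholt_in : forall k a b F, rho_lt Fam m a b k -> leW ltW b a ->
            level Fam m k F -> F a -> F b).
  { intros k a b F [j [Hj [E [HE [E1 E2]]]]] Hl HFl Fa.
    assert (j <= k) by lia.
    exact (@closure_in _ _ _ _ _ _ HF _ _ _ _ _ _ H HE E2 E1 Hl HFl Fa). }
  assert (mk_M : forall k x z F, le z x -> level Fam m k F -> F (phi x) -> F (phi z) ->
            M_set ltW Fam m le phi k x z).
  { intros k x z F Hzx HFl Fx Fz. split; auto. split; auto.
    exists k; split; auto. exists F; auto. }
  assert (trans_M : forall k x y z, le y x -> rho_lt Fam m (phi x) (phi y) k ->
            M_set ltW Fam m le phi k y z -> M_set ltW Fam m le phi k x z).
  { intros k x y z Hyx Hr HM.
    destruct (@exists_level _ _ HW _ _ _ Htype _ HF (phi x) k) as [F [HFl Fx]].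
    assert (Fy : F (phi y)) by (apply (rholt_in k (phi x)); auto).
    apply (mk_M k x z F); auto.
    - destruct HM as [Hzy _]. eauto.
    - apply (in_F k y z F); auto. }
  intros x y k. split; [|split; [|split; [|split]]].
  - intros i [Hix [Hiy Hinf]] Hrho z. split.
    + intros [HMx HMy].
      destruct (@exists_level _ _ HW _ _ _ Htype _ HF (phi x) k) as [F [HFl Fx]].
      apply (mk_M k i z F); auto.
      all: try (apply Hinf; [apply HMx|apply HMy]).
      all: try (apply (in_F k x z F); auto; fail).
      all: try (apply (rholt_in k (phi x)); auto; apply Hrho; auto).
    + intro HM. split.
      * apply (trans_M k x i z); auto; apply Hrho; auto.
      * apply (trans_M k y i z); auto; apply Hrho; auto.
  - intros Hyx Hr z HM. apply (trans_M k x y z); auto.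
  - intro Hn. split.
    + destruct (@exists_level _ _ HW _ _ _ Htype _ HF (phi y) k) as [F [HFl Fy]].
      apply (mk_M k y y F); auto.
    + intros [H _]. contradiction.
  - intros [_ Hsucc] Hrho z. split.
    + intros [HM Hnot]. destruct (classic (z = x)) as [E|Hne]; auto. exfalso.
      destruct (Hsucc z) as [p [Hp Hzp]]. { split; auto. apply HM. }
      apply Hnot. exists p; split; auto.
      destruct (@exists_level _ _ HW _ _ _ Htype _ HF (phi x) k) as [F [HFl Fx]].
      apply (mk_M k p z F); auto.
      * apply (rholt_in k (phi x)); auto.
        -- apply Hrho; [exists x; auto | exists p; auto].
        -- apply Hsub. apply Hp.
      * apply (in_F k x z F); auto.
    + intros ->. split.
      * destruct (@exists_level _ _ HW _ _ _ Htype _ HF (phi x) k) as [F [HFl Fx]].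
        apply (mk_M k x x F); auto.
      * intros [p [[[Hpx Hne] _] [Hxp _]]]. apply Hne; auto.
  - intros Hinc z [[H1 _] [H2 _]]. apply Hinc; exists z; auto.
Qed.
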